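(* Fix integers $0\le k\le n$ and on $\mathbb{C}^n=\mathbb{R}^n_x\oplus\sqrt{-1}\mathbb{R}^n_y$ let $\rho_1=\sum_{i=1}^n x_i^2$, $\rho_2=\sum_{i=1}^k x_i^2+\sum_{i=k+1}^n y_i^2$, $|x|:=\sqrt{\rho_1}$, $|y|:=\sqrt{\rho_2}$, and $L_1=\{\rho_1=0\}$, $L_2=\{\rho_2=0\}$. For $r>0$ set $V_r=\{|x|<r\}\cup\{|y|<r\}$. Then for $r>0$ small enough there exist $0<D<1$ and a nonnegative function $\beta_r:\mathbb{C}^n\to\mathbb{R}$ whose restriction to $V_{Dr}$ is weakly plurisubharmonic and which satisfies \[\beta_r=|y|^2\ \text{on}\ \{|x|\ge r\}\cap V_{Dr},\qquad \beta_r=|x|^2\ \text{on}\ \{|y|\ge r\}\cap V_{Dr}.\] Furthermore, $\beta_r$ vanishes at least to first order on $L_1$ and on $L_2$, and the pseudometric $dd^c\beta_r(\cdot,\sqrt{-1}\cdot)$ is dominated above by the Euclidean metric $g$ everywhere and is equivalent to $g$ on $\{|y|>r\}\cap V_{Dr}$ and on $\{|x|>r\}\cap V_{Dr}$.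
   Context: Weak plurisubharmonicity of a function $f$ means that the Levi form $dd^cf(\cdot,\sqrt{-1}\cdot)$ is positive semidefinite; this symmetric form is called the pseudometric induced by $f$. Two (pseudo)metrics are equivalent if each is bounded by a positive constant multiple of the other. *)

(* Defs.v *)
From HB Require Import structures.
From mathcomp Require Import all_boot all_order all_algebra.
From mathcomp Require Import all_classical all_reals all_analysis.
Set Implicit Arguments. Unset Strict Implicit. Unset Printing Implicit Defensive.
Import Order.TTheory GRing.Theory Num.Theory.
Import numFieldNormedType.Exports.
Local Open Scope ring_scope.

(* C^n = R^n_x (+) sqrt(-1) R^n_y, a point z is the pair (x, y). *)
Definition Cn (R : realType) (n : nat) := ('rV[R]_n * 'rV[R]_n)%type.

Section Defs.
Variables (R : realType) (n : nat).

Definition xco (z : Cn R n) (i : 'I_n) : R := z.1 ord0 i.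
Definition yco (z : Cn R n) (i : 'I_n) : R := z.2 ord0 i.

(* complex structure: J (a + sqrt(-1) b) = -b + sqrt(-1) a *)
Definition Jc (v : Cn R n) : Cn R n := (- v.2, v.1).

Definition geucl (v : Cn R n) : R :=
  \sum_(i < n) (xco v i ^+ 2 + yco v i ^+ 2).

Definition rho1 (z : Cn R n) : R := \sum_(i < n) xco z i ^+ 2.
Definition rho2 (k : nat) (z : Cn R n) : R :=
  \sum_(i < n | (i < k)%N) xco z i ^+ 2 + \sum_(i < n | (k <= i)%N) yco z i ^+ 2.

Definition absx (z : Cn R n) : R := Num.sqrt (rho1 z).
Definition absy (k : nat) (z : Cn R n) : R := Num.sqrt (rho2 k z).

Definition Vset (k : nat) (r : R) : set (Cn R n) :=
  [set z | absx z < r] `|` [set z | absy k z < r].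

Definition C2 (f : Cn R n -> R) : Prop :=
  (forall z, differentiable f z) /\
  (forall v z, differentiable (fun a => 'D_v f a) z) /\
  (forall v w, continuous (fun a => 'D_w ('D_v f) a)).

(* Levi form dd^c f(v, sqrt(-1) v) at z, written via the real Hessian:
   D^2 f(v,v) + D^2 f(Jv,Jv) (convention dd^c = 2i dd-bar; other
   conventions differ by a positive constant factor). *)
Definition levi (f : Cn R n -> R) (z v : Cn R n) : R :=
  'D_v ('D_v f) z + 'D_(Jc v) ('D_(Jc v) f) z.

Definition weakly_psh_on (A : set (Cn R n)) (f : Cn R n -> R) : Prop :=
  forall z, A z -> forall v, 0 <= levi f z v.

End Defs.

(* Main.v *)
Require Import Defs.
From HB Require Import structures.
From mathcomp Require Import all_boot all_order all_algebra.
From mathcomp Require Import all_classical all_reals all_analysis.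
From mathcomp Require Import ring lra.
Import Order.TTheory GRing.Theory Num.Theory.
Import numFieldNormedType.Exports.
Local Open Scope classical_set_scope.
Local Open Scope ring_scope.

Section F.
Context {R : realType} {V : normedModType R}.

Lemma cadd (f g : V -> R) x : {for x, continuous f} -> {for x, continuous g} ->
  {for x, continuous (fun z => f z + g z)}.
Proof. exact: continuousD. Qed.
Lemma cmul (f g : V -> R) x : {for x, continuous f} -> {for x, continuous g} ->
  {for x, continuous (fun z => f z * g z)}.
Proof. exact: continuousM. Qed.

Definition D1 (f : V -> R) (f1 : V -> V -> R) :=
  forall z, differentiable f z /\ forall v, 'D_v f z = f1 z v.

Lemma D1_add {f g f1 g1} : D1 f f1 -> D1 g g1 ->
  D1 (fun z => f z + g z) (fun z v => f1 z v + g1 z v).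
Proof.
move=> hf hg z; have [df ef] := hf z; have [dg eg] := hg z.
split; first exact: (differentiableD df dg).
move=> v; rewrite (deriveD (diff_derivable df) (diff_derivable dg)).
by rewrite ef eg.
Qed.

Lemma D1_mul {f g f1 g1} : D1 f f1 -> D1 g g1 ->
  D1 (fun z => f z * g z) (fun z v => f z * g1 z v + g z * f1 z v).
Proof.
move=> hf hg z; have [df ef] := hf z; have [dg eg] := hg z.
split; first exact: (differentiableM df dg).
move=> v; rewrite (deriveM (diff_derivable df) (diff_derivable dg)).
by rewrite ef eg.
Qed.

Lemma D1_cst (c : R) : D1 (fun _ => c) (fun _ _ => 0).
Proof.
move=> z; split; first exact: differentiable_cst.
by move=> v; rewrite derive_cst.
Qed.

Lemma D1_comp {phi phi1 : R -> R} {f f1} :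
  (forall x, differentiable phi x /\ 'D_1 phi x = phi1 x) -> D1 f f1 ->
  D1 (fun z => phi (f z)) (fun z v => phi1 (f z) * f1 z v).
Proof.
move=> hp hf z; have [df ef] := hf z; have [dp ep] := hp (f z).
have dc : differentiable (phi \o f) z by apply: differentiable_comp.
split; first exact: dc.
move=> v; rewrite (deriveE _ dc) diff_comp //= -(deriveE _ df) ef.
rewrite diff1E // derive1E ep /=. by rewrite mulrC.
Qed.

Lemma D1_ext {f f1 f1'} : D1 f f1 -> (forall z v, f1 z v = f1' z v) -> D1 f f1'.
Proof. by move=> h e z; have [d1 d2] := h z; split => // v; rewrite d2. Qed.

Lemma D1_extf {f f' f1} : D1 f f1 -> (forall z, f z = f' z) -> D1 f' f1.
Proof.
by move=> h e; have -> : f' = f by apply/funext => z; rewrite e.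
Qed.

Lemma D1_cont {f f1} : D1 f f1 -> continuous f.
Proof. by move=> h z; apply: differentiable_continuous; case: (h z). Qed.

Definition D2 (f : V -> R) f1 (f2 : V -> V -> V -> R) :=
  [/\ D1 f f1, (forall v, D1 (fun z => f1 z v) (fun z w => f2 z v w)) &
      (forall v w, continuous (fun z => f2 z v w))].

Lemma D2_add {f g f1 g1 f2 g2} : D2 f f1 f2 -> D2 g g1 g2 ->
  D2 (fun z => f z + g z) (fun z v => f1 z v + g1 z v)
     (fun z v w => f2 z v w + g2 z v w).
Proof.
move=> [a1 a2 a3] [b1 b2 b3]; split.
- exact: D1_add.
- by move=> v; apply: D1_add.
- by move=> v w z; apply: cadd; [apply: a3|apply: b3].
Qed.

Lemma D2_mul {f g f1 g1 f2 g2} : D2 f f1 f2 -> D2 g g1 g2 ->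
  D2 (fun z => f z * g z) (fun z v => f z * g1 z v + g z * f1 z v)
     (fun z v w => (f z * g2 z v w + g1 z v * f1 z w) +
                   (g z * f2 z v w + f1 z v * g1 z w)).
Proof.
move=> [a1 a2 a3] [b1 b2 b3]; split.
- exact: D1_mul.
- by move=> v; apply: D1_add; apply: D1_mul.
- move=> v w z.
  have cf := D1_cont a1; have cg := D1_cont b1.
  have cf1 := D1_cont (a2 v); have cg1 := D1_cont (b2 v).
  have cf1w := D1_cont (a2 w); have cg1w := D1_cont (b2 w).
  apply: cadd; apply: cadd; apply: cmul.
  all: try exact: cf z. all: try exact: cg z. all: try exact: cf1 z. all: try exact: cg1 z.
  all: try exact: cf1w z. all: try exact: cg1w z.
  all: try exact: (a3 v w z). all: try exact: (b3 v w z).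
Qed.

Definition RC2 (phi phi1 phi2 : R -> R) :=
  [/\ (forall x, differentiable phi x /\ 'D_1 phi x = phi1 x),
      (forall x, differentiable phi1 x /\ 'D_1 phi1 x = phi2 x) &
      continuous phi2].

Lemma D2_comp {phi phi1 phi2 f f1 f2} : RC2 phi phi1 phi2 -> D2 f f1 f2 ->
  D2 (fun z => phi (f z)) (fun z v => phi1 (f z) * f1 z v)
     (fun z v w => phi1 (f z) * f2 z v w + f1 z v * (phi2 (f z) * f1 z w)).
Proof.
move=> [p1 p2 p3] [a1 a2 a3]; split.
- exact: D1_comp.
- move=> v; apply: D1_mul => //; exact: D1_comp.
- move=> v w z.
  have cf := D1_cont a1; have cf1 := D1_cont (a2 v); have cf1w := D1_cont (a2 w).
  have cp1 : continuous phi1 by move=> x; apply: differentiable_continuous; case: (p2 x).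
  have cp1f : continuous (fun z => phi1 (f z)).
    by move=> y; apply: (continuous_comp (cf y) (cp1 (f y))).
  have cp2f : continuous (fun z => phi2 (f z)).
    by move=> y; apply: (continuous_comp (cf y) (p3 (f y))).
  apply: cadd; apply: cmul; try apply: cmul.
  all: try exact: cp1f z. all: try exact: cp2f z. all: try exact: cf1 z.
  all: try exact: cf1w z. all: try exact: (a3 v w z).
Qed.

Lemma D2_cst (c : R) : D2 (fun _ => c) (fun _ _ => 0) (fun _ _ _ => 0).
Proof.
split; [exact: D1_cst| move=> v; exact: D1_cst|move=> v w; exact: cst_continuous].
Qed.

Lemma D2_ext {f f' f1 f1' f2 f2'} : D2 f f1 f2 -> (forall z, f z = f' z) ->
  (forall z v, f1 z v = f1' z v) -> (forall z v w, f2 z v w = f2' z v w) ->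
  D2 f' f1' f2'.
Proof.
move=> [a1 a2 a3] e0 e1 e2; split.
- exact: (D1_extf (D1_ext a1 e1) e0).
- move=> v; apply: (D1_ext (f1 := fun z w => f2 z v w)).
    apply: (D1_extf (a2 v)) => z; exact: e1.
  by move=> z w; rewrite e2.
- move=> v w; have -> : (fun z => f2' z v w) = (fun z => f2 z v w).
    by apply/funext => z; rewrite e2.
  exact: a3.
Qed.

End F.
Section P.
Context {R : realType}.
Definition pp (x : R) : R := Num.max x 0.

Lemma pp_cont : continuous pp.
Proof.
move=> x; rewrite /pp.
have := @continuous_max _ R idfun (cst 0) x (@cvg_id _ _) (@cst_continuous _ _ _ _).
by [].
Qed.

Lemma ppX_cont k : continuous (fun x => pp x ^+ k).
Proof.
move=> x; elim: k => [|k IH].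
  by under eq_fun do rewrite expr0; exact: cst_continuous.
under eq_fun do rewrite exprS.
exact: (continuousM (pp_cont x) IH).
Qed.

Lemma pp_ge0 x : 0 <= pp x.
Proof. by rewrite /pp le_max lexx orbT. Qed.
Lemma pp_pos x : 0 < x -> pp x = x.
Proof. by move=> h; rewrite /pp max_l // ltW. Qed.
Lemma pp_neg x : x <= 0 -> pp x = 0.
Proof. by move=> h; rewrite /pp max_r. Qed.

Lemma pp0 : pp 0 = 0.
Proof. by rewrite /pp maxxx. Qed.

Lemma ppX_der0 k : (1 < k)%N -> is_derive (0:R) (1:R) (fun x => pp x ^+ k) 0.
Proof.
move=> hk; set f := (fun x => pp x ^+ k).
have k0 : (0 < k)%N by apply: ltn_trans hk.
have k1 : (0 < k.-1)%N by rewrite -ltnS prednK.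
have C : (fun h : R => h^-1 *: ((f \o shift 0) (h *: 1) - f 0)) @ 0^' --> (0:R).
  have E : {near 0^', (fun h : R => pp h ^+ k.-1) =1
     (fun h : R => h^-1 *: ((f \o shift 0) (h *: 1) - f 0))}.
    near=> h => /=.
    have hn0 : h != 0 by near: h; exact: nbhs_dnbhs_neq.
    rewrite /f addr0 [h *: 1]mulr1 pp0 expr0n /= (gtn_eqF k0) subr0.
    have -> : h^-1 *: pp h ^+ k = h^-1 * pp h ^+ k by [].
    rewrite -[in RHS](prednK k0) exprS.
    have [hp|hn] := ltP 0 h.
      by rewrite pp_pos // mulrA mulVf // mul1r.
    by rewrite pp_neg // mul0r mulr0 expr0n /= (gtn_eqF k1).
  apply: (cvg_trans (near_eq_cvg E)).
  have H : (fun x => pp x ^+ k.-1) x @[x --> (0:R)^'] --> pp 0 ^+ k.-1.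
    apply: (@cvg_within_filter _ _ _ (nbhs (0:R))); exact: (ppX_cont k.-1 0).
  by rewrite pp0 expr0n /= (gtn_eqF k1) in H.
split; first by apply/cvg_ex; exists 0.
exact: cvg_lim.
Unshelve. all: by end_near.
Qed.

Lemma ppX_D1 k : (1 < k)%N -> forall x,
  differentiable (fun x => pp x ^+ k) x /\ 'D_1 (fun x => pp x ^+ k) x = k%:R * pp x ^+ k.-1.
Proof.
move=> hk x.
suff H : is_derive x (1:R) (fun x => pp x ^+ k) (k%:R * pp x ^+ k.-1).
  by split; [apply/derivable1_diffP; case: H|case: H].
have [xp|xn|<-] := ltgtP 0 x.
- have H : is_derive x (1:R) ((@id R) ^+ k) ((k%:R * x ^+ k.-1) *: 1) by apply: is_deriveX.
  have E : \near x, ((@id R) ^+ k) x = pp x ^+ k.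
    near=> y; rewrite pp_pos; last by near: y; exact: lt_nbhsr.
    by elim: (k) => [|j IH]; rewrite ?expr0 ?exprS //= -IH.
  have := near_eq_is_derive E H.
  by rewrite pp_pos // /GRing.scale /= mulr1.
- have E : \near x, (0:R) = pp x ^+ k.
    near=> y; rewrite pp_neg ?expr0n ?(gtn_eqF (ltn_trans _ hk)) //.
    by apply: ltW; near: y; exact: lt_nbhsl.
  apply: (near_eq_is_derive E).
  rewrite (pp_neg _ (ltW xn)) expr0n /= (gtn_eqF (_ : 0 < k.-1)%N) ?mulr0; last by rewrite -ltnS prednK // (ltn_trans _ hk).
  exact: is_derive_cst.
- rewrite pp0 expr0n /= (gtn_eqF (_ : 0 < k.-1)%N) ?mulr0; last by rewrite -ltnS prednK // (ltn_trans _ hk).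
  exact: ppX_der0.
Unshelve. all: by end_near.
Qed.
End P.
Section T.
Context {R : realType}.
Definition RD1 (phi phi1 : R -> R) := forall x, differentiable phi x /\ 'D_1 phi x = phi1 x.

Lemma RD1_D1 {phi phi1} : RD1 phi phi1 -> D1 phi (fun x v => v * phi1 x).
Proof.
move=> h x; have [d e] := h x; split => // v.
by rewrite deriveE // diff1E // derive1E e.
Qed.

Lemma D1_RD1 {phi phi1} : D1 phi phi1 -> RD1 phi (fun x => phi1 x 1).
Proof. by move=> h x; have [d e] := h x; split => //; rewrite e. Qed.

Definition T3 (x : R) := pp x ^+ 3.
Definition T3d (x : R) := 3 * pp x ^+ 2.
Definition T3dd (x : R) := 6 * pp x.

Lemma T3_RC2 : RC2 T3 T3d T3dd.
Proof.
split.
- by move=> x; have [d e] := ppX_D1 3 isT x; split => //; rewrite /T3 e.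
- have h2 := RD1_D1 (fun x => ppX_D1 2 isT x).
  have := D1_RD1 (D1_mul (D1_cst (V := R) 3) h2).
  move=> h x; have [d e] := h x; split => //.
  by rewrite /T3d e /T3dd /= expr1; ring.
- move=> x; exact: (continuousM (@cst_continuous _ _ (6:R) x) (pp_cont x)).
Qed.
End T.
Section H.
Context {R : realType}.
Lemma cmulT {T : topologicalType} (f g : T -> R) x : {for x, continuous f} -> {for x, continuous g} ->
  {for x, continuous (fun z => f z * g z)}.
Proof. exact: continuousM. Qed.
Lemma caddT {T : topologicalType} (f g : T -> R) x : {for x, continuous f} -> {for x, continuous g} ->
  {for x, continuous (fun z => f z + g z)}.
Proof. exact: continuousD. Qed.

Lemma D1_id : D1 (fun x : R => x) (fun _ v => v).
Proof.
move=> x; split; first by have [] := is_diff_id x.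
by move=> v; rewrite derive_id.
Qed.

Lemma D1_shift (t : R) : D1 (fun x : R => x - t) (fun _ v => v).
Proof. by apply: (D1_ext (D1_add D1_id (D1_cst (- t)))) => z v; rewrite addr0. Qed.

Lemma D1_phis {phi phi1 : R -> R} (t : R) : RD1 phi phi1 ->
  D1 (fun x => phi (x - t)) (fun x v => phi1 (x - t) * v).
Proof. by move=> h; apply: (D1_comp h (D1_shift t)). Qed.

Lemma RD1_ext {phi phi1 phi1' : R -> R} : RD1 phi phi1 -> (forall x, phi1 x = phi1' x) ->
  RD1 phi phi1'.
Proof. by move=> h e x; have [d1 d2] := h x; split => //; rewrite d2. Qed.

Definition cH : R := 32 / 27.
Definition Hf (s : R) := s + (- cH) * (T3 (s - 1/4) + (-2) * T3 (s - 5/8) + T3 (s - 1)).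
Definition Hd (s : R) := 1 + (- cH) * (T3d (s - 1/4) + (-2) * T3d (s - 5/8) + T3d (s - 1)).
Definition Hdd (s : R) := (- cH) * (T3dd (s - 1/4) + (-2) * T3dd (s - 5/8) + T3dd (s - 1)).

Lemma Hf_RC2 : RC2 Hf Hd Hdd.
Proof.
have [t1 t2 t3] := @T3_RC2 R.
have t1' : @RD1 R T3 T3d by [].
have t2' : @RD1 R T3d T3dd by [].
split.
- have h := D1_add D1_id (D1_mul (D1_cst (- cH))
     (D1_add (D1_add (D1_phis (1/4) t1') (D1_mul (D1_cst (-2)) (D1_phis (5/8) t1')))
       (D1_phis 1 t1'))).
  apply: (RD1_ext (D1_RD1 h)) => x /=; rewrite /Hd; ring.
- have h := D1_add (D1_cst 1) (D1_mul (D1_cst (- cH))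
     (D1_add (D1_add (D1_phis (1/4) t2') (D1_mul (D1_cst (-2)) (D1_phis (5/8) t2')))
       (D1_phis 1 t2'))).
  apply: (RD1_ext (D1_RD1 h)) => x /=; rewrite /Hdd; ring.
- have cs : forall t : R, continuous (fun x : R => T3dd (x - t)).
    move=> t x; apply: (@continuous_comp _ _ _ (fun x : R => x - t) T3dd).
      exact: (D1_cont (D1_shift t)).
    exact: t3.
  move=> x; rewrite /Hdd.
  refine (@cmulT _ (fun _ : R => - cH) (fun s : R => (T3dd (s - 1 / 4) + -2 * T3dd (s - 5 / 8) + T3dd (s - 1))) x _ _).
  - exact: cst_continuous.
  refine (@caddT _ (fun s : R => T3dd (s - 1/4) + -2 * T3dd (s - 5/8)) (fun s : R => T3dd (s-1)) x _ (cs 1 x)).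
  refine (@caddT _ (fun s : R => T3dd (s - 1/4)) (fun s : R => -2 * T3dd (s - 5/8)) x (cs _ x) _).
  refine (@cmulT _ (fun _ : R => -2) (fun s : R => T3dd (s - 5/8)) x (@cst_continuous _ _ (-2 : R) x) (cs _ x)).
Qed.
End H.
Section CS.
Context {R : realType}.
Lemma dsum_ge0 (I : finType) (P : pred I) (t : I -> I -> R) :
  (forall i j, 0 <= t i j + t j i) -> 0 <= \sum_(i | P i) \sum_(j | P j) t i j.
Proof.
move=> h.
have E : \sum_(i | P i) \sum_(j | P j) (t i j + t j i) =
   2 * \sum_(i | P i) \sum_(j | P j) t i j.
  rewrite (eq_bigr (fun i => \sum_(j | P j) t i j + \sum_(j | P j) t j i));
    last by move=> i _; rewrite big_split.
  rewrite big_split /= [X in _ + X]exchange_big /=; ring.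
have : 0 <= 2 * \sum_(i | P i) \sum_(j | P j) t i j.
  by rewrite -E; apply: sumr_ge0 => i _; apply: sumr_ge0 => j _; exact: h.
by rewrite pmulr_rge0.
Qed.

Lemma ccs (I : finType) (P : pred I) (x y a b : I -> R) :
  (\sum_(i | P i) (x i * a i - y i * b i)) ^+ 2 + (\sum_(i | P i) (x i * b i + y i * a i)) ^+ 2
  <= (\sum_(i | P i) (x i ^+ 2 + y i ^+ 2)) * (\sum_(i | P i) (a i ^+ 2 + b i ^+ 2)).
Proof.
rewrite -subr_ge0.
set t := fun i j => (x i ^+ 2 + y i ^+ 2) * (a j ^+ 2 + b j ^+ 2)
   - ((x i * a i - y i * b i) * (x j * a j - y j * b j) + (x i * b i + y i * a i) * (x j * b j + y j * a j)).
have -> : (\sum_(i | P i) (x i ^+ 2 + y i ^+ 2)) * (\sum_(i | P i) (a i ^+ 2 + b i ^+ 2)) -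
  ((\sum_(i | P i) (x i * a i - y i * b i)) ^+ 2 + (\sum_(i | P i) (x i * b i + y i * a i)) ^+ 2)
  = \sum_(i | P i) \sum_(j | P j) t i j.
  rewrite !expr2 !big_distrlr /= -big_split /= -sumrB; apply: eq_bigr => i _.
  by rewrite -big_split -sumrB; apply: eq_bigr => j _.
apply: dsum_ge0 => i j.
have -> : t i j + t j i = (x i * a j + y i * b j - (x j * a i + y j * b i)) ^+ 2 +
   (y i * a j - x i * b j - (y j * a i - x j * b i)) ^+ 2 by rewrite /t; ring.
by apply: addr_ge0; apply: sqr_ge0.
Qed.
End CS.

Section Cn.
Context {R : realType} {n : nat}.
Local Notation V := (Cn R n).

Lemma D2_lin {L : V -> R} : D1 L (fun _ v => L v) -> D2 L (fun _ v => L v) (fun _ _ _ => 0).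
Proof.
move=> h; split => //; first by move=> v; exact: D1_cst.
by move=> v w; exact: cst_continuous.
Qed.

Lemma D2_sq {L : V -> R} : D1 L (fun _ v => L v) ->
  D2 (fun z => L z ^+ 2) (fun z v => 2 * L z * L v) (fun z v w => 2 * L v * L w).
Proof.
move=> h; have h2 := D2_lin h.
apply: (D2_ext (D2_mul h2 h2)) => *; rewrite ?expr2 //=; ring.
Qed.

Lemma D2_sum {I : Type} (s : seq I) (P : pred I) (F : I -> V -> R) F1 F2 :
  (forall i, D2 (F i) (F1 i) (F2 i)) ->
  D2 (fun z => \sum_(i <- s | P i) F i z) (fun z v => \sum_(i <- s | P i) F1 i z v)
     (fun z v w => \sum_(i <- s | P i) F2 i z v w).
Proof.
move=> h; elim: s => [|i s IH].
  by apply: (D2_ext (D2_cst (V := V) 0)) => *; rewrite big_nil.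
case Pi: (P i).
  by apply: (D2_ext (D2_add (h i) IH)) => *; rewrite big_cons Pi.
by apply: (D2_ext IH) => *; rewrite big_cons Pi.
Qed.

Lemma xco_lin (i : 'I_n) : linear (fun z : V => xco z i).
Proof. by move=> a x y; rewrite /xco /= !mxE. Qed.
Lemma yco_lin (i : 'I_n) : linear (fun z : V => yco z i).
Proof. by move=> a x y; rewrite /yco /= !mxE. Qed.
Lemma xco_cont (i : 'I_n) : continuous (fun z : V => xco z i).
Proof.
move=> z; rewrite /xco.
apply: (@continuous_comp _ _ _ (fun z : V => z.1) (fun M : 'rV[R]_n => M ord0 i)).
  exact: cvg_fst.
exact: coord_continuous.
Qed.
Lemma yco_cont (i : 'I_n) : continuous (fun z : V => yco z i).
Proof.
move=> z; rewrite /yco.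
apply: (@continuous_comp _ _ _ (fun z : V => z.2) (fun M : 'rV[R]_n => M ord0 i)).
  exact: cvg_snd.
exact: coord_continuous.
Qed.
Lemma xco_D1 (i : 'I_n) : D1 (fun z : V => xco z i) (fun _ v => xco v i).
Proof.
pose L : {linear V -> R} := HB.pack (fun z : V => xco z i) (GRing.isLinear.Build _ _ _ _ _ (xco_lin i)).
have -> : (fun z : V => xco z i) = L by [].
move=> z; split; first exact/linear_differentiable/xco_cont.
move=> v; rewrite deriveE; last exact/linear_differentiable/xco_cont.
by rewrite diff_lin //; exact: xco_cont.
Qed.
Lemma yco_D1 (i : 'I_n) : D1 (fun z : V => yco z i) (fun _ v => yco v i).
Proof.
pose L : {linear V -> R} := HB.pack (fun z : V => yco z i) (GRing.isLinear.Build _ _ _ _ _ (yco_lin i)).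
have -> : (fun z : V => yco z i) = L by [].
move=> z; split; first exact/linear_differentiable/yco_cont.
move=> v; rewrite deriveE; last exact/linear_differentiable/yco_cont.
by rewrite diff_lin //; exact: yco_cont.
Qed.

Definition Yco (k : nat) (z : V) (i : 'I_n) := if (i < k)%N then xco z i else yco z i.

Lemma Yco_D1 k (i : 'I_n) : D1 (fun z : V => Yco k z i) (fun _ v => Yco k v i).
Proof. rewrite /Yco; case: (i < k)%N; [exact: xco_D1|exact: yco_D1]. Qed.

Lemma rho2E k (z : V) : rho2 k z = \sum_(i < n) Yco k z i ^+ 2.
Proof.
rewrite [RHS](bigID (fun i : 'I_n => (i < k)%N)) /= /rho2; congr (_ + _).
  by apply: eq_bigr => i hi; rewrite /Yco hi.
apply: eq_big => [i|i hi]; first by rewrite -leqNgt.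
by rewrite /Yco ifF // ltnNge hi.
Qed.

Lemma D2_rho1 : D2 (@rho1 R n) (fun z v => \sum_(i < n) 2 * xco z i * xco v i)
   (fun z v w => \sum_(i < n) 2 * xco v i * xco w i).
Proof.
have h := D2_sum (index_enum 'I_n) xpredT _ _ _ (fun i => D2_sq (xco_D1 i)).
by apply: (D2_ext h).
Qed.

Lemma D2_rho2 k : D2 (rho2 k) (fun z v => \sum_(i < n) 2 * Yco k z i * Yco k v i)
   (fun z v w => \sum_(i < n) 2 * Yco k v i * Yco k w i).
Proof.
apply: (D2_ext (D2_sum (index_enum _) xpredT _ _ _ (fun i => D2_sq (Yco_D1 k i)))) => //.
by move=> z; rewrite rho2E.
Qed.

Lemma C2_D2 {f : V -> R} {f1 f2} : D2 f f1 f2 -> C2 f.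
Proof.
move=> [a1 a2 a3].
have E : forall v, (fun a => 'D_v f a) = (fun a => f1 a v).
  by move=> v; apply/funext => a; have [_ ->] := a1 a.
split; [|split].
- by move=> z; case: (a1 z).
- by move=> v z; rewrite E; case: (a2 v z).
- move=> v w; rewrite E.
  have -> : (fun a => 'D_w (fun a0 => f1 a0 v) a) = (fun a => f2 a v w).
    by apply/funext => a; have [_ ->] := a2 v a.
  exact: a3.
Qed.

Lemma levi_D2 {f : V -> R} {f1 f2} : D2 f f1 f2 ->
  forall z v, levi f z v = f2 z v v + f2 z (Jc v) (Jc v).
Proof.
move=> [a1 a2 a3] z v.
have E : forall v, (fun a => 'D_v f a) = (fun a => f1 a v).
  by move=> u; apply/funext => a; have [_ ->] := a1 a.
rewrite /levi E E.
by have [_ ->] := a2 v z; have [_ ->] := a2 (Jc v) z.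
Qed.

Lemma beta_D2 (P Q : V -> R) p1 p2 q1 q2 (c : R) :
  D2 P p1 p2 -> D2 Q q1 q2 ->
  C2 (fun z => c * (Hf (P z) * Hf (Q z))) /\
  forall z v, levi (fun z => c * (Hf (P z) * Hf (Q z))) z v =
    c * (Hf (Q z) * (Hd (P z) * (p2 z v v + p2 z (Jc v) (Jc v)) +
                     Hdd (P z) * (p1 z v ^+ 2 + p1 z (Jc v) ^+ 2)) +
         Hf (P z) * (Hd (Q z) * (q2 z v v + q2 z (Jc v) (Jc v)) +
                     Hdd (Q z) * (q1 z v ^+ 2 + q1 z (Jc v) ^+ 2)) +
         2 * (Hd (P z) * Hd (Q z)) * (p1 z v * q1 z v + p1 z (Jc v) * q1 z (Jc v))).
Proof.
move=> hP hQ.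
have hHP := D2_comp Hf_RC2 hP.
have hHQ := D2_comp Hf_RC2 hQ.
have h := D2_mul (D2_cst (V := V) c) (D2_mul hHP hHQ).
split; first exact: (C2_D2 h).
move=> z v; rewrite (levi_D2 h) /=; ring.
Qed.
End Cn.

Section Ineq.
Context {R : realType} {n : nat}.
Local Notation V := (Cn R n).
Variable k : nat.
Variables z v : V.
Local Notation x i := (xco z i).
Local Notation y i := (yco z i).
Local Notation a i := (xco v i).
Local Notation b i := (yco v i).

Lemma xcoJ i : xco (Jc v) i = - b i.
Proof. by rewrite /xco /Jc /= mxE. Qed.
Lemma ycoJ i : yco (Jc v) i = a i.
Proof. by []. Qed.

Definition A1 := \sum_(i < n) x i * a i.
Definition A2 := \sum_(i < n) x i * xco (Jc v) i.
Definition B1 := \sum_(i < n) Yco k z i * Yco k v i.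
Definition B2 := \sum_(i < n) Yco k z i * Yco k (Jc v) i.

Lemma geuclY : geucl v = \sum_(i < n) (Yco k v i ^+ 2 + Yco k (Jc v) i ^+ 2).
Proof.
rewrite /geucl; apply: eq_bigr => i _; rewrite /Yco xcoJ ycoJ.
by case: (i < k)%N; rewrite ?sqrrN // addrC.
Qed.

Lemma F1 : A1 ^+ 2 + A2 ^+ 2 <= rho1 z * geucl v.
Proof.
have := ccs _ xpredT (fun i => x i) (fun _ => 0) (fun i => a i) (fun i => xco (Jc v) i).
rewrite /A1 /A2 /rho1 /geucl.
have -> : \sum_(i < n) (x i * a i - 0 * xco (Jc v) i) = \sum_(i < n) x i * a i.
  by apply: eq_bigr => i _; rewrite mul0r subr0.
have -> : \sum_(i < n) (x i * xco (Jc v) i + 0 * a i) = \sum_(i < n) x i * xco (Jc v) i.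
  by apply: eq_bigr => i _; rewrite mul0r addr0.
have -> : \sum_(i < n) (x i ^+ 2 + 0 ^+ 2) = \sum_(i < n) x i ^+ 2.
  by apply: eq_bigr => i _; rewrite expr0n addr0.
have -> : \sum_(i < n) (a i ^+ 2 + xco (Jc v) i ^+ 2) = \sum_(i < n) (a i ^+ 2 + b i ^+ 2).
  by apply: eq_bigr => i _; rewrite xcoJ sqrrN.
by [].
Qed.

Lemma F2 : B1 ^+ 2 + B2 ^+ 2 <= rho2 k z * geucl v.
Proof.
have := ccs _ xpredT (fun i => Yco k z i) (fun _ => 0) (fun i => Yco k v i) (fun i => Yco k (Jc v) i).
rewrite /B1 /B2 rho2E (geuclY).
have -> : \sum_(i < n) (Yco k z i * Yco k v i - 0 * Yco k (Jc v) i) = \sum_(i < n) Yco k z i * Yco k v i.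
  by apply: eq_bigr => i _; rewrite mul0r subr0.
have -> : \sum_(i < n) (Yco k z i * Yco k (Jc v) i + 0 * Yco k v i) = \sum_(i < n) Yco k z i * Yco k (Jc v) i.
  by apply: eq_bigr => i _; rewrite mul0r addr0.
have -> : \sum_(i < n) (Yco k z i ^+ 2 + 0 ^+ 2) = \sum_(i < n) Yco k z i ^+ 2.
  by apply: eq_bigr => i _; rewrite expr0n addr0.
by [].
Qed.

Lemma F3 : - ((rho1 z + rho2 k z) * geucl v) <= 4 * (A1 * B1 + A2 * B2).
Proof.
pose Pk := fun i : 'I_n => (i < k)%N.
pose al1 := \sum_(i < n | Pk i) x i * a i.
pose al2 := \sum_(i < n | Pk i) x i * b i.
pose be1 := \sum_(i < n | ~~ Pk i) x i * a i.
pose be2 := \sum_(i < n | ~~ Pk i) x i * b i.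
pose ga1 := \sum_(i < n | ~~ Pk i) y i * a i.
pose ga2 := \sum_(i < n | ~~ Pk i) y i * b i.
have eA1 : A1 = al1 + be1 by rewrite /A1 (bigID Pk).
have eA2 : A2 = - (al2 + be2).
  rewrite /A2 (bigID Pk) /= opprD -!sumrN; congr (_ + _); apply: eq_bigr => i _;
  by rewrite xcoJ mulrN.
have eB1 : B1 = al1 + ga2.
  rewrite /B1 (bigID Pk) /=; congr (_ + _); apply: eq_bigr => i; rewrite /Yco /Pk.
    by move=> ->.
  by move=> /negbTE ->.
have eB2 : B2 = - al2 + ga1.
  rewrite /B2 (bigID Pk) /= -sumrN; congr (_ + _); apply: eq_bigr => i; rewrite /Yco /Pk.
    by move=> ->; rewrite xcoJ mulrN.
  by move=> /negbTE ->.
pose X := \sum_(i < n | ~~ Pk i) (x i ^+ 2 + y i ^+ 2).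
pose Y := \sum_(i < n | ~~ Pk i) (a i ^+ 2 + b i ^+ 2).
have X0 : 0 <= X by apply: sumr_ge0 => i _; apply: addr_ge0; apply: sqr_ge0.
have Y0 : 0 <= Y by apply: sumr_ge0 => i _; apply: addr_ge0; apply: sqr_ge0.
have U0 : 0 <= rho1 z + rho2 k z.
  by apply: addr_ge0; [apply: sumr_ge0 => i _; apply: sqr_ge0|
     rewrite rho2E; apply: sumr_ge0 => i _; apply: sqr_ge0].
have XU : X <= rho1 z + rho2 k z.
  have e1 : rho1 z = \sum_(i < n | Pk i) x i ^+ 2 + \sum_(i < n | ~~ Pk i) x i ^+ 2.
    by rewrite /rho1 (bigID Pk).
  have e2 : rho2 k z = \sum_(i < n | Pk i) x i ^+ 2 + \sum_(i < n | ~~ Pk i) y i ^+ 2.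
    rewrite /rho2; congr (_ + _); apply: eq_bigl => i; by rewrite /Pk -leqNgt.
  rewrite e1 e2 /X big_split /=.
  have : 0 <= \sum_(i < n | Pk i) x i ^+ 2 by apply: sumr_ge0 => i _; apply: sqr_ge0.
  lra.
have Yg : Y <= geucl v.
  rewrite /geucl (bigID Pk) /= -/Y.
  have : 0 <= \sum_(i < n | Pk i) (a i ^+ 2 + b i ^+ 2).
    by apply: sumr_ge0 => i _; apply: addr_ge0; apply: sqr_ge0.
  lra.
have C := ccs _ (fun i => ~~ Pk i) (fun i => x i) (fun i => y i) (fun i => a i) (fun i => b i).
rewrite -/X -/Y sumrB big_split /= -/be1 -/ga2 -/be2 -/ga1 in C.
have XY : X * Y <= (rho1 z + rho2 k z) * geucl v.
  apply: (@le_trans _ _ ((rho1 z + rho2 k z) * Y)); first exact: ler_wpM2r.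
  exact: ler_wpM2l.
rewrite eA1 eA2 eB1 eB2.
have Sq : 0 <= (2 * al1 + be1 + ga2) ^+ 2 + (2 * al2 + be2 - ga1) ^+ 2.
  by apply: addr_ge0; apply: sqr_ge0.
have Id : 4 * ((al1 + be1) * (al1 + ga2) + - (al2 + be2) * (- al2 + ga1)) =
   (2 * al1 + be1 + ga2) ^+ 2 + (2 * al2 + be2 - ga1) ^+ 2
   - ((be1 - ga2) ^+ 2 + (be2 + ga1) ^+ 2) by ring.
rewrite Id; lra.
Qed.
End Ineq.

Section HP.
Context {R : realType}.
Lemma pp_pos0 (x : R) : 0 <= x -> pp x = x.
Proof. by move=> h; rewrite /pp max_l. Qed.
Lemma H_R1 {s : R} : s <= 1/4 -> [/\ Hf s = s, Hd s = 1 & Hdd s = 0].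
Proof.
move=> h; rewrite /Hf /Hd /Hdd /T3 /T3d /T3dd !pp_neg; try lra.
by split; ring.
Qed.
Lemma H_R2 {s : R} : 1/4 <= s <= 5/8 -> [/\ Hf s = s - cH * (s - 1/4) ^+ 3,
   Hd s = 1 - 3 * cH * (s - 1/4) ^+ 2 & Hdd s = - 6 * cH * (s - 1/4)].
Proof.
move=> /andP[h1 h2]; rewrite /Hf /Hd /Hdd /T3 /T3d /T3dd (pp_pos0 (s - 1/4)) ?(pp_neg (s - 5/8)) ?(pp_neg (s - 1)); try lra.
by split; ring.
Qed.
Lemma H_R3 {s : R} : 5/8 <= s <= 1 -> [/\ Hf s = 5/8 - cH * (1 - s) ^+ 3,
   Hd s = 3 * cH * (1 - s) ^+ 2 & Hdd s = - 6 * cH * (1 - s)].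
Proof.
move=> /andP[h1 h2]; rewrite /Hf /Hd /Hdd /T3 /T3d /T3dd (pp_pos0 (s - 1/4)) ?(pp_pos0 (s - 5/8)) ?(pp_neg (s - 1)); try lra.
by rewrite /cH; split; field.
Qed.
Lemma H_R4 {s : R} : 1 <= s -> [/\ Hf s = 5/8, Hd s = 0 & Hdd s = 0].
Proof.
move=> h; rewrite /Hf /Hd /Hdd /T3 /T3d /T3dd (pp_pos0 (s - 1/4)) ?(pp_pos0 (s - 5/8)) ?(pp_pos0 (s - 1)); try lra.
by rewrite /cH; split; field.
Qed.

Lemma H_props {s : R} : 0 <= s ->
  [/\ 0 <= Hf s <= 5/8, 0 <= Hd s <= 1, Hdd s <= 0 & Hd s * s <= 1].
Proof.
move=> s0.
have [h1|h1] := leP s (1/4).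
  have [-> -> ->] := H_R1 h1; split; lra.
have [h2|h2] := leP s (5/8).
  have /H_R2 [-> -> ->] : 1/4 <= s <= 5/8 by apply/andP; split; lra.
  rewrite /cH; set d := s - 1/4.
  have d0 : 0 <= d by rewrite /d; lra.
  have d1 : d <= 3/8 by rewrite /d; lra.
  have dd : d ^+ 2 <= 9/64 by rewrite expr2; nra.
  split; rewrite ?expr2 ?exprS ?expr2 in dd *; try (apply/andP; split); nra.
have [h3|h3] := leP s 1.
  have /H_R3 [-> -> ->] : 5/8 <= s <= 1 by apply/andP; split; lra.
  rewrite /cH; set e := 1 - s.
  have e0 : 0 <= e by rewrite /e; lra.
  have e1 : e <= 3/8 by rewrite /e; lra.
  have ee : e ^+ 2 <= 9/64 by rewrite expr2; nra.
  split; rewrite ?expr2 ?exprS ?expr2 in ee *; try (apply/andP; split); nra.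
have [-> -> ->] := H_R4 (ltW h3); split; lra.
Qed.

Lemma H_bracket {t : R} : 1/4 <= t ->
  0 <= 2 * Hf t - t * Hd t - (14 * Hd t - 4 * t * Hdd t) / 256.
Proof.
move=> h1.
have [h2|h2] := leP t (5/8).
  have /H_R2 [-> -> ->] : 1/4 <= t <= 5/8 by apply/andP; split; lra.
  rewrite /cH; set d := t - 1/4.
  have -> : t = d + 1/4 by rewrite /d; ring.
  have d0 : 0 <= d by rewrite /d; lra.
  have d1 : d <= 3/8 by rewrite /d; lra.
  rewrite !exprS expr0 !mulr1; nra.
have [h3|h3] := leP t 1.
  have /H_R3 [-> -> ->] : 5/8 <= t <= 1 by apply/andP; split; lra.
  rewrite /cH; set e := 1 - t.
  have -> : t = 1 - e by rewrite /e; ring.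
  have e0 : 0 <= e by rewrite /e; lra.
  have e1 : e <= 3/8 by rewrite /e; lra.
  rewrite !exprS expr0 !mulr1; nra.
have [-> -> ->] := H_R4 (ltW h3); lra.
Qed.

Definition Lx (s t G qa qb qab : R) :=
  Hf t * (Hd s * (2 * G) + Hdd s * qa) + Hf s * (Hd t * (2 * G) + Hdd t * qb) +
  2 * (Hd s * Hd t) * qab.

Lemma core (s t G qa qb qab : R) : 0 <= s -> s < 1/256 -> 0 <= t -> 0 <= G ->
  0 <= qb -> qb <= 4 * t * G -> qa <= 4 * s * G ->
  - ((s + t) * G) <= qab -> - (4 * qa + qb / 4) <= 2 * qab ->
  0 <= Lx s t G qa qb qab.
Proof.
move=> s0 s1 t0 G0 qb0 qb1 qa1 q1 q2.
have s4 : s <= 1/4 by lra.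
rewrite /Lx; have [-> -> ->] := H_R1 s4.
have [h1|h1] := leP t (1/4).
  have [-> -> ->] := H_R1 h1; lra.
have [_ /andP[d0 d1] dd0 _] := H_props t0.
have B := H_bracket (ltW h1).
have e0 : - (16 * s * G + t * G) <= 2 * qab by lra.
have e1 : - (Hd t * (16 * s * G + t * G)) <= Hd t * (2 * qab).
  by rewrite -mulrN; apply: ler_wpM2l.
have e2 : s * (Hdd t * (4 * t * G)) <= s * (Hdd t * qb).
  have f0 : 0 <= - Hdd t by lra.
  have f1 : 0 <= 4 * t * G - qb by lra.
  have := mulr_ge0 s0 (mulr_ge0 f0 f1).
  lra.
have e3 : 0 <= G * (2 * Hf t - t * Hd t - (14 * Hd t - 4 * t * Hdd t) / 256) by apply: mulr_ge0.
have e4 : s * G * (14 * Hd t - 4 * t * Hdd t) <= G * (14 * Hd t - 4 * t * Hdd t) / 256.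
  have f0 : 0 <= 14 * Hd t - 4 * t * Hdd t.
    have f1 : 0 <= - Hdd t by lra.
    have := mulr_ge0 t0 f1; lra.
  have f2 : 0 <= 1/256 - s by lra.
  have := mulr_ge0 (mulr_ge0 G0 f0) f2.
  lra.
nra.
Qed.

Lemma core_sym (s t G qa qb qab : R) : 0 <= t -> t < 1/256 -> 0 <= s -> 0 <= G ->
  0 <= qa -> qa <= 4 * s * G -> qb <= 4 * t * G ->
  - ((s + t) * G) <= qab -> - (qa / 4 + 4 * qb) <= 2 * qab ->
  0 <= Lx s t G qa qb qab.
Proof.
move=> t0 t1 s0 G0 qa0 qa1 qb1 q1 q2.
have := @core t s G qb qa qab t0 t1 s0 G0 qa0 qa1 qb1 _ _.
have -> : Lx t s G qb qa qab = Lx s t G qa qb qab by rewrite /Lx; ring.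
by apply; lra.
Qed.

Lemma upper (s t G qa qb qab : R) : 0 <= s -> 0 <= t -> 0 <= G ->
  0 <= qa -> qa <= 4 * s * G -> 0 <= qb -> qb <= 4 * t * G -> 2 * qab <= qa + qb ->
  Lx s t G qa qb qab <= 21/2 * G.
Proof.
move=> s0 t0 G0 qa0 qa1 qb0 qb1 q.
have [/andP[hs0 hs1] /andP[ds0 ds1] dds ds] := H_props s0.
have [/andP[ht0 ht1] /andP[dt0 dt1] ddt dt] := H_props t0.
rewrite /Lx.
have le1 : forall p w : R, 0 <= p <= 1 -> 0 <= w -> p * w <= w.
  move=> p w /andP[p0 p1] w0; have h : 0 <= 1 - p by lra.
  have := mulr_ge0 h w0; lra.
have G2 : 0 <= 2 * G by lra.
have a1 : Hf t * (Hd s * (2 * G) + Hdd s * qa) <= 5/8 * (2 * G).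
  have b1 := le1 _ _ (introT andP (conj ds0 ds1)) G2.
  have b2 : Hdd s * qa <= 0 by apply: mulr_le0_ge0.
  have b3 : Hf t * (Hd s * (2 * G) + Hdd s * qa) <= Hf t * (2 * G) by apply: ler_wpM2l => //; lra.
  have b4 : Hf t * (2 * G) <= 5/8 * (2 * G) by apply: ler_wpM2r.
  lra.
have a2 : Hf s * (Hd t * (2 * G) + Hdd t * qb) <= 5/8 * (2 * G).
  have b1 := le1 _ _ (introT andP (conj dt0 dt1)) G2.
  have b2 : Hdd t * qb <= 0 by apply: mulr_le0_ge0.
  have b3 : Hf s * (Hd t * (2 * G) + Hdd t * qb) <= Hf s * (2 * G) by apply: ler_wpM2l => //; lra.
  have b4 : Hf s * (2 * G) <= 5/8 * (2 * G) by apply: ler_wpM2r.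
  lra.
have dd0 : 0 <= Hd s * Hd t by apply: mulr_ge0.
have a3 : (Hd s * Hd t) * (2 * qab) <= (Hd s * Hd t) * (4 * (s + t) * G).
  by apply: ler_wpM2l => //; lra.
have a5 : (Hd s * Hd t) * (4 * (s + t) * G) <= 8 * G.
  have c1 : Hd t * (Hd s * s) <= Hd s * s by apply: le1; [apply/andP; split|apply: mulr_ge0].
  have c2 : Hd s * (Hd t * t) <= Hd t * t by apply: le1; [apply/andP; split|apply: mulr_ge0].
  have -> : (Hd s * Hd t) * (4 * (s + t) * G) = 4 * G * (Hd t * (Hd s * s) + Hd s * (Hd t * t)) by ring.
  have c3 : Hd t * (Hd s * s) + Hd s * (Hd t * t) <= 2 by lra.
  have G4 : 0 <= 4 * G by lra.
  have := ler_wpM2l G4 c3; lra.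
have -> : 2 * (Hd s * Hd t) * qab = (Hd s * Hd t) * (2 * qab) by ring.
lra.
Qed.
End HP.

Section NF.
Context {R : realType}.
Lemma norm_facts (i U W g A1 A2 B1 B2 : R) : 0 < i -> 0 <= g -> 0 <= U -> 0 <= W ->
  A1 ^+ 2 + A2 ^+ 2 <= U * g -> B1 ^+ 2 + B2 ^+ 2 <= W * g ->
  - ((U + W) * g) <= 4 * (A1 * B1 + A2 * B2) ->
  [/\ 0 <= (2 * i * A1) ^+ 2 + (2 * i * A2) ^+ 2,
      (2 * i * A1) ^+ 2 + (2 * i * A2) ^+ 2 <= 4 * (U * i) * (i * g),
      0 <= (2 * i * B1) ^+ 2 + (2 * i * B2) ^+ 2,
      (2 * i * B1) ^+ 2 + (2 * i * B2) ^+ 2 <= 4 * (W * i) * (i * g) &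
      [/\ - ((U * i + W * i) * (i * g)) <= 2 * i * A1 * (2 * i * B1) + 2 * i * A2 * (2 * i * B2),
         - (4 * ((2 * i * A1) ^+ 2 + (2 * i * A2) ^+ 2) + ((2 * i * B1) ^+ 2 + (2 * i * B2) ^+ 2) / 4)
             <= 2 * (2 * i * A1 * (2 * i * B1) + 2 * i * A2 * (2 * i * B2)),
          - (((2 * i * A1) ^+ 2 + (2 * i * A2) ^+ 2) / 4 + 4 * ((2 * i * B1) ^+ 2 + (2 * i * B2) ^+ 2))
             <= 2 * (2 * i * A1 * (2 * i * B1) + 2 * i * A2 * (2 * i * B2)) &
          2 * (2 * i * A1 * (2 * i * B1) + 2 * i * A2 * (2 * i * B2)) <=
             (2 * i * A1) ^+ 2 + (2 * i * A2) ^+ 2 + ((2 * i * B1) ^+ 2 + (2 * i * B2) ^+ 2)]].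
Proof.
move=> i0 g0 U0 W0 hA hB hAB.
have j0 : 0 <= 4 * i ^+ 2 by apply: mulr_ge0 => //; apply: sqr_ge0.
have qaE : (2 * i * A1) ^+ 2 + (2 * i * A2) ^+ 2 = 4 * i ^+ 2 * (A1 ^+ 2 + A2 ^+ 2) by ring.
have qbE : (2 * i * B1) ^+ 2 + (2 * i * B2) ^+ 2 = 4 * i ^+ 2 * (B1 ^+ 2 + B2 ^+ 2) by ring.
have qabE : 2 * i * A1 * (2 * i * B1) + 2 * i * A2 * (2 * i * B2) = i ^+ 2 * (4 * (A1 * B1 + A2 * B2)) by ring.
rewrite qaE qbE qabE.
have sA : 0 <= A1 ^+ 2 + A2 ^+ 2 by apply: addr_ge0; apply: sqr_ge0.
have sB : 0 <= B1 ^+ 2 + B2 ^+ 2 by apply: addr_ge0; apply: sqr_ge0.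
have i2 : 0 <= i ^+ 2 by apply: sqr_ge0.
split.
- exact: mulr_ge0.
- have -> : 4 * (U * i) * (i * g) = 4 * i ^+ 2 * (U * g) by ring.
  exact: ler_wpM2l.
- exact: mulr_ge0.
- have -> : 4 * (W * i) * (i * g) = 4 * i ^+ 2 * (W * g) by ring.
  exact: ler_wpM2l.
- have s1 : 0 <= i ^+ 2 * ((4 * A1 + B1) ^+ 2 + (4 * A2 + B2) ^+ 2).
    by apply: mulr_ge0 => //; apply: addr_ge0; apply: sqr_ge0.
  have s2 : 0 <= i ^+ 2 * ((A1 + 4 * B1) ^+ 2 + (A2 + 4 * B2) ^+ 2).
    by apply: mulr_ge0 => //; apply: addr_ge0; apply: sqr_ge0.
  have s3 : 0 <= i ^+ 2 * ((A1 - B1) ^+ 2 + (A2 - B2) ^+ 2).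
    by apply: mulr_ge0 => //; apply: addr_ge0; apply: sqr_ge0.
  split.
  + have -> : - ((U * i + W * i) * (i * g)) = i ^+ 2 * (- ((U + W) * g)) by ring.
    exact: ler_wpM2l.
  + rewrite -subr_ge0; have -> : 2 * (i ^+ 2 * (4 * (A1 * B1 + A2 * B2))) -
       - (4 * (4 * i ^+ 2 * (A1 ^+ 2 + A2 ^+ 2)) + 4 * i ^+ 2 * (B1 ^+ 2 + B2 ^+ 2) / 4) =
       i ^+ 2 * ((4 * A1 + B1) ^+ 2 + (4 * A2 + B2) ^+ 2) by field.
    exact: s1.
  + rewrite -subr_ge0; have -> : 2 * (i ^+ 2 * (4 * (A1 * B1 + A2 * B2))) -
       - (4 * i ^+ 2 * (A1 ^+ 2 + A2 ^+ 2) / 4 + 4 * (4 * i ^+ 2 * (B1 ^+ 2 + B2 ^+ 2))) =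
       i ^+ 2 * ((A1 + 4 * B1) ^+ 2 + (A2 + 4 * B2) ^+ 2) by field.
    exact: s2.
  + rewrite -subr_ge0; have -> : 4 * i ^+ 2 * (A1 ^+ 2 + A2 ^+ 2) + 4 * i ^+ 2 * (B1 ^+ 2 + B2 ^+ 2) -
       2 * (i ^+ 2 * (4 * (A1 * B1 + A2 * B2))) =
       4 * (i ^+ 2 * ((A1 - B1) ^+ 2 + (A2 - B2) ^+ 2)) by ring.
    by apply: mulr_ge0.
Qed.
End NF.

Section Main.
Context {R : realType} {n : nat} (k : nat).
Local Notation V := (Cn R n).

Definition Pf (rr : R) (z : V) := rho1 z * rr^-1.
Definition Qf (rr : R) (z : V) := rho2 k z * rr^-1.
Definition betaf (rr : R) (z : V) := (8 * rr / 5) * (Hf (Pf rr z) * Hf (Qf rr z)).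

Definition p1f (rr : R) (z v : V) := rr^-1 * \sum_(i < n) 2 * xco z i * xco v i.
Definition p2f (rr : R) (z v w : V) := rr^-1 * \sum_(i < n) 2 * xco v i * xco w i.
Definition q1f (rr : R) (z v : V) := rr^-1 * \sum_(i < n) 2 * Yco k z i * Yco k v i.
Definition q2f (rr : R) (z v w : V) := rr^-1 * \sum_(i < n) 2 * Yco k v i * Yco k w i.

Lemma D2_P rr : D2 (Pf rr) (p1f rr) (p2f rr).
Proof.
apply: (D2_ext (D2_mul D2_rho1 (D2_cst (V := V) rr^-1))) => [z|z v|z v w] //=.
- by rewrite /p1f mulr0 add0r.
- by rewrite /p2f !mulr0 mul0r !add0r addr0.
Qed.

Lemma D2_Q rr : D2 (Qf rr) (q1f rr) (q2f rr).
Proof.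
apply: (D2_ext (D2_mul (D2_rho2 k) (D2_cst (V := V) rr^-1))) => [z|z v|z v w] //=.
- by rewrite /q1f mulr0 add0r.
- by rewrite /q2f !mulr0 mul0r !add0r addr0.
Qed.

Lemma C2_beta rr : C2 (betaf rr).
Proof. exact: (beta_D2 _ _ _ _ _ _ (8 * rr / 5) (D2_P rr) (D2_Q rr)).1. Qed.

Lemma sum2 (F : 'I_n -> R) : \sum_(i < n) 2 * F i = 2 * \sum_(i < n) F i.
Proof. by rewrite mulr_sumr. Qed.

Lemma levi_beta rr z v : levi (betaf rr) z v =
  (8 * rr / 5) * Lx (Pf rr z) (Qf rr z) (rr^-1 * geucl v)
     ((2 * rr^-1 * A1 z v) ^+ 2 + (2 * rr^-1 * A2 z v) ^+ 2)
     ((2 * rr^-1 * B1 k z v) ^+ 2 + (2 * rr^-1 * B2 k z v) ^+ 2)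
     (2 * rr^-1 * A1 z v * (2 * rr^-1 * B1 k z v) + 2 * rr^-1 * A2 z v * (2 * rr^-1 * B2 k z v)).
Proof.
rewrite (beta_D2 _ _ _ _ _ _ (8 * rr / 5) (D2_P rr) (D2_Q rr)).2.
have e1 : p1f rr z v = 2 * rr^-1 * A1 z v.
  rewrite /p1f /A1 !mulr_sumr; apply: eq_bigr => i _; ring.
have e2 : p1f rr z (Jc v) = 2 * rr^-1 * A2 z v.
  rewrite /p1f /A2 !mulr_sumr; apply: eq_bigr => i _; ring.
have e3 : q1f rr z v = 2 * rr^-1 * B1 k z v.
  rewrite /q1f /B1 !mulr_sumr; apply: eq_bigr => i _; ring.
have e4 : q1f rr z (Jc v) = 2 * rr^-1 * B2 k z v.
  rewrite /q1f /B2 !mulr_sumr; apply: eq_bigr => i _; ring.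
have e5 : p2f rr z v v + p2f rr z (Jc v) (Jc v) = 2 * (rr^-1 * geucl v).
  rewrite /p2f -mulrDr -big_split /geucl /= !mulr_sumr.
  by apply: eq_bigr => i _; rewrite xcoJ; ring.
have e6 : q2f rr z v v + q2f rr z (Jc v) (Jc v) = 2 * (rr^-1 * geucl v).
  rewrite /q2f -mulrDr -big_split (geuclY k) /= !mulr_sumr.
  by apply: eq_bigr => i _; ring.
rewrite e1 e2 e3 e4 e5 e6 /Lx; congr (_ * _); ring.
Qed.
End Main.

Section Fin.
Context {R : realType}.
Lemma sqrt_lt_sq (U c : R) : 0 <= U -> 0 <= c -> Num.sqrt U < c -> U < c ^+ 2.
Proof.
move=> U0 c0 h; rewrite -(sqr_sqrtr U0).
have a0 := sqrtr_ge0 U; move: (Num.sqrt U) a0 h => a a0 h.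
have h1 : 0 < c - a by lra.
have h2 : 0 < c + a by lra.
have := mulr_gt0 h1 h2.
have -> : (c - a) * (c + a) = c * c - a * a by ring.
rewrite !expr2; lra.
Qed.
Lemma sqrt_le_sq (U c : R) : 0 <= U -> 0 <= c -> c <= Num.sqrt U -> c ^+ 2 <= U.
Proof.
move=> U0 c0 h; rewrite -(sqr_sqrtr U0).
have a0 := sqrtr_ge0 U; move: (Num.sqrt U) a0 h => a a0 h.
have h1 : 0 <= a - c by lra.
have h2 : 0 <= a + c by lra.
have := mulr_ge0 h1 h2.
have -> : (a - c) * (a + c) = a * a - c * c by ring.
rewrite !expr2; lra.
Qed.
Lemma sqrt_gt_sq (U c : R) : 0 <= U -> 0 <= c -> c < Num.sqrt U -> c ^+ 2 < U.
Proof.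
move=> U0 c0 h; rewrite -(sqr_sqrtr U0).
have a0 := sqrtr_ge0 U; move: (Num.sqrt U) a0 h => a a0 h.
have h1 : 0 < a - c by lra.
have h2 : 0 < a + c by lra.
have := mulr_gt0 h1 h2.
have -> : (a - c) * (a + c) = a * a - c * c by ring.
rewrite !expr2; lra.
Qed.
End Fin.

Section Fin2.
Context {R : realType} {n : nat}.
Lemma rho1_ge0 (z : Cn R n) : 0 <= rho1 z.
Proof. by apply: sumr_ge0 => i _; apply: sqr_ge0. Qed.
Lemma rho2_ge0 k (z : Cn R n) : 0 <= rho2 k z.
Proof. by rewrite rho2E; apply: sumr_ge0 => i _; apply: sqr_ge0. Qed.
Lemma geucl_ge0 (v : Cn R n) : 0 <= geucl v.
Proof. by apply: sumr_ge0 => i _; apply: addr_ge0; apply: sqr_ge0. Qed.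

Lemma Vfacts k (r : R) (z : Cn R n) : 0 < r -> Vset k (1/16 * r) z ->
  Pf (r ^+ 2) z < 1/256 \/ Qf k (r ^+ 2) z < 1/256.
Proof.
move=> r0 hV; rewrite /Pf /Qf.
have c0 : 0 <= 1/16 * r by lra.
have r2 : 0 < r ^+ 2 by apply: exprn_gt0.
have E : (1/16 * r) ^+ 2 = 1/256 * r ^+ 2 by field.
case: hV => h.
- left; have H := sqrt_lt_sq _ _ (rho1_ge0 z) c0 h.
  rewrite E in H; rewrite ltr_pdivrMr //; lra.
- right; have H := sqrt_lt_sq _ _ (rho2_ge0 k z) c0 h.
  rewrite E in H; rewrite ltr_pdivrMr //; lra.
Qed.
End Fin2.

Theorem proposition2p7 (R : realType) (n k : nat) (hkn : (k <= n)%N) :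
  exists r0 : R, 0 < r0 /\
  forall r : R, 0 < r -> r < r0 ->
  exists D : R, 0 < D /\ D < 1 /\
  exists beta : Cn R n -> R,
    C2 beta /\
    (forall z, 0 <= beta z) /\
    weakly_psh_on (Vset k (D * r)) beta /\
    (forall z, r <= absx z -> Vset k (D * r) z -> beta z = absy k z ^+ 2) /\
    (forall z, r <= absy k z -> Vset k (D * r) z -> beta z = absx z ^+ 2) /\
    (forall z, rho1 z = 0 -> beta z = 0) /\
    (forall z, rho2 k z = 0 -> beta z = 0) /\
    (exists C : R, 0 < C /\ forall z v, levi beta z v <= C * geucl v) /\
    (exists c : R, 0 < c /\ forall z, r < absy k z -> Vset k (D * r) z ->
        forall v, c * geucl v <= levi beta z v) /\
    (exists c : R, 0 < c /\ forall z, r < absx z -> Vset k (D * r) z ->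
        forall v, c * geucl v <= levi beta z v).
Proof.
exists 1; split; first lra.
move=> r r0 r1.
exists (1/16); split; first lra; split; first lra.
set rr := r ^+ 2.
have rr0 : 0 < rr by apply: exprn_gt0.
have rrE : r ^+ 2 = rr by [].
clearbody rr.
have ri0 : 0 < rr^-1 by rewrite invr_gt0.
have c0 : 0 <= 8 * rr / 5 by apply: divr_ge0 => //; apply: mulr_ge0 => //; lra.
have s0 : forall z : Cn R n, 0 <= Pf rr z by move=> z; apply: mulr_ge0 => //; [exact: rho1_ge0|lra].
have t0 : forall z : Cn R n, 0 <= Qf k rr z by move=> z; apply: mulr_ge0 => //; [exact: rho2_ge0|lra].
have G0 : forall v : Cn R n, 0 <= rr^-1 * geucl v by move=> v; apply: mulr_ge0; [lra|exact: geucl_ge0].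
have NF := fun (z v : Cn R n) => norm_facts (rr^-1) (rho1 z) (rho2 k z) (geucl v) (A1 z v) (A2 z v) (B1 k z v) (B2 k z v)
   ri0 (geucl_ge0 v) (rho1_ge0 z) (rho2_ge0 k z) (F1 z v) (F2 k z v) (F3 k z v).
exists (betaf k rr).
split; first exact: C2_beta.
split.
  move=> z; rewrite /betaf; apply: mulr_ge0 => //.
  have [/andP[h1 _] _ _ _] := H_props (s0 z).
  have [/andP[h2 _] _ _ _] := H_props (t0 z).
  exact: mulr_ge0.
split.
  move=> z hV v; rewrite levi_beta; apply: mulr_ge0 => //.
  have [qa0 qa1 qb0 qb1 [qab1 qab2 qab3 qab4]] := NF z v.
  case: (Vfacts k r z r0 hV) => hs; rewrite rrE in hs.
  - by apply: core => //.
  - by apply: core_sym => //.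
have rrn0 : rr != 0 by rewrite gt_eqF.
have D1r : 1/16 * r < r by lra.
split.
  move=> z hx hV.
  have U1 := sqrt_le_sq _ _ (rho1_ge0 z) (ltW r0) hx; rewrite rrE in U1.
  have s1 : 1 <= Pf rr z by rewrite /Pf ler_pdivlMr // mul1r.
  case: (Vfacts k r z r0 hV) => hs; rewrite rrE in hs; first by lra.
  have t4 : Qf k rr z <= 1/4 by lra.
  rewrite /betaf; have [-> _ _] := H_R4 s1; have [-> _ _] := H_R1 t4.
  rewrite /absy sqr_sqrtr ?rho2_ge0 // /Qf; by field.
split.
  move=> z hy hV.
  have W1 := sqrt_le_sq _ _ (rho2_ge0 k z) (ltW r0) hy; rewrite rrE in W1.
  have t1 : 1 <= Qf k rr z by rewrite /Qf ler_pdivlMr // mul1r.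
  case: (Vfacts k r z r0 hV) => hs; rewrite rrE in hs; last by lra.
  have s4 : Pf rr z <= 1/4 by lra.
  rewrite /betaf; have [-> _ _] := H_R4 t1; have [-> _ _] := H_R1 s4.
  rewrite /absx sqr_sqrtr ?rho1_ge0 // /Pf; by field.
split.
  move=> z h; rewrite /betaf /Pf h mul0r.
  have h0 : (0:R) <= 1/4 by lra.
  by have [-> _ _] := H_R1 h0; rewrite mul0r mulr0.
split.
  move=> z h; rewrite /betaf /Qf h mul0r.
  have h0 : (0:R) <= 1/4 by lra.
  by have [-> _ _] := H_R1 h0; rewrite mulr0 mulr0.
split.
  exists 17; split; first lra.
  move=> z v; rewrite levi_beta.
  have [qa0 qa1 qb0 qb1 [qab1 qab2 qab3 qab4]] := NF z v.
  have L := upper _ _ _ _ _ _ (s0 z) (t0 z) (G0 v) qa0 qa1 qb0 qb1 qab4.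
  have := ler_wpM2l c0 L.
  have -> : 8 * rr / 5 * (21 / 2 * (rr^-1 * geucl v)) = 84/5 * geucl v by field.
  have := geucl_ge0 v; lra.
split.
  exists 2; split; first lra.
  move=> z hy hV v.
  have W1 := sqrt_gt_sq _ _ (rho2_ge0 k z) (ltW r0) hy; rewrite rrE in W1.
  have t1 : 1 <= Qf k rr z by rewrite /Qf ler_pdivlMr // mul1r; lra.
  case: (Vfacts k r z r0 hV) => hs; rewrite rrE in hs; last by lra.
  have s4 : Pf rr z <= 1/4 by lra.
  rewrite levi_beta /Lx; have [-> -> ->] := H_R4 t1; have [-> -> ->] := H_R1 s4.
  have -> : forall qa qb qab : R, 8 * rr / 5 * (5 / 8 * (1 * (2 * (rr^-1 * geucl v)) + 0 * qa) +
     Pf rr z * (0 * (2 * (rr^-1 * geucl v)) + 0 * qb) + 2 * (1 * 0) * qab) = 2 * geucl v.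
    by move=> qa qb qab; field.
  by [].
exists 2; split; first lra.
move=> z hx hV v.
have U1 := sqrt_gt_sq _ _ (rho1_ge0 z) (ltW r0) hx; rewrite rrE in U1.
have s1 : 1 <= Pf rr z by rewrite /Pf ler_pdivlMr // mul1r; lra.
case: (Vfacts k r z r0 hV) => hs; rewrite rrE in hs; first by lra.
have t4 : Qf k rr z <= 1/4 by lra.
rewrite levi_beta /Lx; have [-> -> ->] := H_R4 s1; have [-> -> ->] := H_R1 t4.
have -> : forall qa qb qab : R, 8 * rr / 5 * (Qf k rr z * (0 * (2 * (rr^-1 * geucl v)) + 0 * qa) +
   5 / 8 * (1 * (2 * (rr^-1 * geucl v)) + 0 * qb) + 2 * (0 * 1) * qab) = 2 * geucl v.
  by move=> qa qb qab; field.
by [].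
Qed.
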